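(* Let $S$ be a 2-tangle and write its bracket expansion as $\langle S\rangle = \alpha_S\langle[0]\rangle + \beta_S\langle[\infty]\rangle$. Let $[1]$ denote the one-crossing tangle with $\langle[1]\rangle = A\langle[0]\rangle + A^{-1}\langle[\infty]\rangle$ and $[-1]$ its mirror image, and let $L = N(S+[1])$ and $L' = N(S+[-1])$, oriented (compatibly outside the crossing) so that the crossing of $L$ coming from $[1]$ is a negative crossing (so $w(L') = w(L)+2$). If $L$ and $L'$ have the same Jones polynomial, then $\alpha_S = 0$; that is, $\langle S\rangle = \kappa\langle[\infty]\rangle$ where $\kappa$ is defined by $\langle L\rangle = -A^{-3}\kappa$.
   Context: The bracket polynomial $\langle\cdot\rangle$ is the regular isotopy invariant of unoriented diagrams defined by $\langle \chi\rangle = A\langle \asymp\rangle + A^{-1}\langle >\!<\rangle$ and loop value $d=-A^2-A^{-2}$; the Jones polynomial is determined by $f_K(A) = (-A^3)^{-w(K)}\langle K\rangle$, with $w$ the writhe. A 2-tangle has exterior edges NW, NE, SW, SE. $[0]$ is the crossingless tangle joining NW–NE and SW–SE; $[\infty]$ joins NW–SW and NE–SE. Every tangle satisfies $\langle T\rangle = \alpha_T\langle[0]\rangle+\beta_T\langle[\infty]\rangle$ for well-defined Laurent polynomials $\alpha_T,\beta_T$. The sum $T+S$ attaches NE of $T$ to NW of $S$ and SE of $T$ to SW of $S$. The numerator $N(T)$ is the link obtained by joining NW to NE and SW to SE. *)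

(* Defs.v *)
From HB Require Import structures.
From mathcomp Require Import all_boot all_order all_algebra.
Set Implicit Arguments. Unset Strict Implicit. Unset Printing Implicit Defensive.
Import Order.TTheory GRing.Theory Num.Theory.
Local Open Scope ring_scope.

(* Coefficient ring: Laurent polynomials in A are represented inside   *)
(* the field of rational functions Q(A) = {fraction {poly int}}; the   *)
(* embedding Z[A,A^-1] -> Q(A) is injective.                           *)
Definition LF := {fraction {poly int}}.
Definition A : LF := tofrac ('X : {poly int}).
Definition dloop : LF := - A ^+ 2 - A ^- 2.

(* Diagrams as Morse words, read bottom to top.  At each level the     *)
(* strand endpoints are at positions 0,1,...,n-1 from left to right.   *)
(*  Cross i b : strands at positions i and i+1 cross (the strand from  *)
(*              bottom position i ends at top position i+1).           *)
(*              b = true : the strand going bottom-left -> top-right   *)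
(*              is the over strand; b = false : the strand going       *)
(*              bottom-right -> top-left is the over strand.           *)
(*  Cup i     : a local minimum inserting two new endpoints at i, i+1. *)
(*  Cap i     : a local maximum joining the endpoints at i and i+1.    *)
Inductive slice := Cross of nat & bool | Cup of nat | Cap of nat.

Definition slice_ok (s : slice) (n : nat) : option nat :=
  match s with
  | Cross i _ => if (i.+1 < n)%N then Some n else None
  | Cup i => if (i <= n)%N then Some n.+2 else None
  | Cap i => if (i.+1 < n)%N then Some n.-2 else None
  end.

Fixpoint word_ok (w : seq slice) (n : nat) : option nat :=
  match w with
  | [::] => Some n
  | s :: w' => match slice_ok s n with Some m => word_ok w' m | None => None end
  end.

(* A 2-tangle: bottom endpoints SW (0), SE (1); top endpoints NW (0),   *)
(* NE (1).  A link diagram: word from 0 to 0 endpoints.                 *)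
Definition is_tangle (w : seq slice) : Prop := word_ok w 2 = Some 2%N.

Definition shift_slice (k : nat) (s : slice) : slice :=
  match s with
  | Cross i b => Cross (k + i) b
  | Cup i => Cup (k + i)
  | Cap i => Cap (k + i)
  end.

Definition tzero : seq slice := [:: Cap 0; Cup 0].   (* [0]: NW-NE, SW-SE *)
Definition tinf  : seq slice := [::].                 (* [oo]: NW-SW, NE-SE *)
Definition tone  : seq slice := [:: Cross 0 false].
Definition tmone : seq slice := [:: Cross 0 true].

(* tangle sum T + S : NE of T attached to NW of S, SE of T to SW of S. *)
Definition tsum (T S : seq slice) : seq slice :=
  Cup 1 :: T ++ map (shift_slice 2) S ++ [:: Cap 1].

(* numerator N(T) : join NW to NE and SW to SE. *)
Definition numer (T : seq slice) : seq slice := Cup 0 :: T ++ [:: Cap 0].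

(* Bracket: state sum.  Kauffman's rule: the A-smoothing joins the two *)
(* regions swept when the over strand is rotated counterclockwise.     *)
(* For Cross i true that is the vertical smoothing (two straight       *)
(* strands), for Cross i false it is the horizontal smoothing (a cap   *)
(* followed by a cup at i).                                            *)
(* expand w lists, for every state, (A^{#A - #B}, smoothed diagram).   *)
Fixpoint expand (w : seq slice) : seq (LF * seq slice) :=
  match w with
  | [::] => [:: (1, [::])]
  | Cross i b :: w' =>
      let e := expand w' in
      if b then
        [seq (A * p.1, p.2) | p <- e] ++
        [seq (A^-1 * p.1, Cap i :: Cup i :: p.2) | p <- e]
      else
        [seq (A * p.1, Cap i :: Cup i :: p.2) | p <- e] ++
        [seq (A^-1 * p.1, p.2) | p <- e]
  | s :: w' => [seq (p.1, s :: p.2) | p <- expand w']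
  end.

(* Evaluation of a crossingless diagram.  At each level every endpoint  *)
(* records where its strand leads downwards: inl k = bottom endpoint k, *)
(* inr t = an endpoint of the current level carrying the same tag.     *)
(* The state also counts closed loops and holds a fresh-tag counter.    *)
Definition org := (nat + nat)%type.

Definition tl_step (s : slice) (st : seq org * nat * nat) : seq org * nat * nat :=
  let: (cur, loops, f) := st in
  match s with
  | Cup i => (take i cur ++ [:: inr f; inr f] ++ drop i cur, loops, f.+1)
  | Cap i =>
      let o1 := nth (inl 0%N) cur i in
      let o2 := nth (inl 0%N) cur i.+1 in
      let rest := take i cur ++ drop i.+2 cur in
      if o1 == o2 then (rest, loops.+1, f)
      else match o1, o2 with
           | inr _, _ => ([seq (if o == o1 then o2 else o) | o <- rest], loops, f)
           | _, inr _ => ([seq (if o == o2 then o1 else o) | o <- rest], loops, f)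
           | _, _ => (rest, loops, f)
           end
  | Cross _ _ => (cur, loops, f) (* never occurs after smoothing *)
  end.

Fixpoint tl_run (w : seq slice) (st : seq org * nat * nat) : seq org * nat * nat :=
  match w with
  | [::] => st
  | s :: w' => tl_run w' (tl_step s st)
  end.

(* Bracket of a link diagram, normalised by <O> = 1. *)
Definition bracket (L : seq slice) : LF :=
  \sum_(p <- expand L) p.1 * dloop ^+ (tl_run p.2 ([::], 0%N, 0%N)).1.2.-1.

Definition is_pat0 (cur : seq org) : bool :=
  match cur with [:: inr a; inr b] => a == b | _ => false end.
Definition is_patinf (cur : seq org) : bool := cur == [:: inl 0%N; inl 1%N].

(* <T> = alpha_T <[0]> + beta_T <[oo]> *)
Definition alpha (T : seq slice) : LF :=
  \sum_(p <- expand T)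
     let r := tl_run p.2 ([:: inl 0%N; inl 1%N], 0%N, 0%N) in
     if is_pat0 r.1.1 then p.1 * dloop ^+ r.1.2 else 0.
Definition beta (T : seq slice) : LF :=
  \sum_(p <- expand T)
     let r := tl_run p.2 ([:: inl 0%N; inl 1%N], 0%N, 0%N) in
     if is_patinf r.1.1 then p.1 * dloop ^+ r.1.2 else 0.

(* Orientations: at every level a direction (true = upward) for each   *)
(* endpoint, consistent along the strands.                             *)
Definition slice_orient_ok (s : slice) (o0 o1 : seq bool) : bool :=
  match s with
  | Cross i _ => (i.+1 < size o0)%N &&
      (o1 == take i o0 ++ [:: nth false o0 i.+1; nth false o0 i] ++ drop i.+2 o0)
  | Cup i => (i <= size o0)%N &&
      ((o1 == take i o0 ++ [:: true; false] ++ drop i o0) ||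
       (o1 == take i o0 ++ [:: false; true] ++ drop i o0))
  | Cap i => [&& (i.+1 < size o0)%N, nth false o0 i != nth false o0 i.+1 &
      (o1 == take i o0 ++ drop i.+2 o0)]
  end.

Fixpoint orient_ok (w : seq slice) (o0 : seq bool) (os : seq (seq bool)) : bool :=
  match w, os with
  | [::], [::] => true
  | s :: w', o1 :: os' => slice_orient_ok s o0 o1 && orient_ok w' o1 os'
  | _, _ => false
  end.

(* os = directions at the levels above slices 0,1,...; the bottom level *)
(* of a link diagram is empty.                                          *)
Definition link_orientation (L : seq slice) (os : seq (seq bool)) : bool :=
  orient_ok L [::] os.

(* Sign of the k-th slice (0 if it is not a crossing).  Cross i true   *)
(* with both strands upward is a positive crossing; reversing one      *)
(* strand changes the sign.                                             *)
Definition crossing_sign (L : seq slice) (os : seq (seq bool)) (k : nat) : int :=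
  match nth (Cup 0) L k with
  | Cross i b =>
      let lev := nth [::] ([::] :: os) k in
      if b == (nth false lev i == nth false lev i.+1) then 1 else -1
  | _ => 0
  end.

Definition writhe (L : seq slice) (os : seq (seq bool)) : int :=
  \sum_(k < size L) crossing_sign L os k.

Definition jones (L : seq slice) (os : seq (seq bool)) : LF :=
  (- A ^+ 3) ^ (- writhe L os) * bracket L.

(* Main.v *)
Require Import Defs.
From HB Require Import structures.
From mathcomp Require Import all_boot all_order all_algebra.
From mathcomp Require Import zify ring.
Set Implicit Arguments. Unset Strict Implicit. Unset Printing Implicit Defensive.
Import Order.TTheory GRing.Theory Num.Theory.
Local Open Scope ring_scope.

Lemma tl_run_cat w1 w2 st : tl_run (w1 ++ w2) st = tl_run w2 (tl_run w1 st).
Proof. by elim: w1 st => [|s w IH] st //=. Qed.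

Lemma expand_cat_sum (w1 w2 : seq slice) (G : seq slice -> LF) :
  \sum_(p <- expand (w1 ++ w2)) p.1 * G p.2 =
  \sum_(p <- expand w1) \sum_(q <- expand w2) p.1 * q.1 * G (p.2 ++ q.2).
Proof.
elim: w1 G => [|s w1 IH] G /=.
  by rewrite big_cons big_nil addr0 /=; apply: eq_bigr => q _; rewrite mul1r.
case: s => [i b|i|i] /=.
- case: b; rewrite !big_cat !big_map /=.
  + under eq_bigr do rewrite -mulrA.
    rewrite -big_distrr IH big_distrr /=.
    under [X in _ + X = _]eq_bigr do rewrite -mulrA.
    rewrite -[X in _ + X = _]big_distrr (IH (fun w => G (Cap i :: Cup i :: w))) big_distrr /=.
    congr (_ + _); apply: eq_bigr => p _; rewrite big_distrr /=; apply: eq_bigr => q _;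
      by rewrite !mulrA.
  + under eq_bigr do rewrite -mulrA.
    rewrite -big_distrr (IH (fun w => G (Cap i :: Cup i :: w))) big_distrr /=.
    under [X in _ + X = _]eq_bigr do rewrite -mulrA.
    rewrite -[X in _ + X = _]big_distrr IH big_distrr /=.
    congr (_ + _); apply: eq_bigr => p _; rewrite big_distrr /=; apply: eq_bigr => q _;
      by rewrite !mulrA.
- by rewrite !big_map /= (IH (fun w => G (Cup i :: w))).
- by rewrite !big_map /= (IH (fun w => G (Cap i :: w))).
Qed.

Fixpoint sc (x : org) (s : seq org) : int :=
  if s is y :: s' then (nat_of_bool (y == x))%:Z - sc x s' else 0.

Definition repl (o1 o2 o : org) : org := if o == o1 then o2 else o.

Lemma sc_cat x a b : sc x (a ++ b) = sc x a + (-1) ^+ (size a) * sc x b.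
Proof.
elim: a => [|y a IH] /=; first by rewrite add0r expr0 mul1r.
by rewrite IH exprS mulN1r mulNr opprD addrA.
Qed.

Lemma sc0 x s : count_mem x s = 0%N -> sc x s = 0.
Proof.
elim: s => [|y s IH] //=.
by case: (y == x) => //= /IH ->.
Qed.

Lemma mem_cnt (x : org) s : (x \in s) = (0 < count_mem x s)%N.
Proof. by rewrite -has_pred1 has_count. Qed.

Lemma repl_pt (o1 o2 x y : org) : o1 != o2 ->
  nat_of_bool (repl o1 o2 y == x) =
  (if x == o1 then 0 else if x == o2 then nat_of_bool (y == o2) + nat_of_bool (y == o1)
   else nat_of_bool (y == x))%N.
Proof.
move=> ne; rewrite /repl.
have [?|ny] := eqVneq y o1; first subst y.
  have [?|nx1] := eqVneq x o1; first by subst x; rewrite eq_sym (negbTE ne).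
  have [?|nx2] := eqVneq x o2; first by subst x; rewrite (negbTE ne).
  by [].
have [?|nx1] := eqVneq x o1; first by subst x; rewrite (negbTE ny).
have [?|nx2] := eqVneq x o2; first by subst x; rewrite addn0.
by [].
Qed.

Lemma cnt_repl o1 o2 x s : o1 != o2 ->
  count_mem x (map (repl o1 o2) s) =
  (if x == o1 then 0 else if x == o2 then count_mem o2 s + count_mem o1 s
   else count_mem x s)%N.
Proof.
move=> ne; elim: s => [|y s IH] /=; first by case: ifP => //; case: ifP.
rewrite repl_pt // IH.
case: ifP => _ //; case: ifP => _ //; by rewrite addnACA.
Qed.

Lemma sc_repl o1 o2 x s : o1 != o2 ->
  sc x (map (repl o1 o2) s) =
  (if x == o1 then 0 else if x == o2 then sc o2 s + sc o1 s else sc x s).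
Proof.
move=> ne; elim: s => [|y s IH] /=; first by case: ifP => //; case: ifP => // _; rewrite addr0.
rewrite repl_pt // IH.
case: ifP => _; first by rewrite subr0.
case: ifP => _ //; by rewrite PoszD opprD addrACA.
Qed.

Lemma mem_repl o1 o2 z s : z \in map (repl o1 o2) s -> (z \in s) || (z == o2).
Proof.
case/mapP => y ys ->; rewrite /repl; case: ifP => _; first by rewrite eqxx orbT.
by rewrite ys.
Qed.

Lemma tl_step_cap a x y b l f :
  tl_step (Cap (size a)) (a ++ x :: y :: b, l, f) =
  if x == y then (a ++ b, l.+1, f) else
  match x, y with
  | inr _, _ => (map (repl x y) (a ++ b), l, f)
  | _, inr _ => (map (repl y x) (a ++ b), l, f)
  | _, _ => (a ++ b, l, f) end.
Proof.
have e1 : nth (inl 0%N) (a ++ x :: y :: b) (size a) = x by elim: a.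
have e2 : nth (inl 0%N) (a ++ x :: y :: b) (size a).+1 = y by clear e1; elim: a.
have e3 : take (size a) (a ++ x :: y :: b) = a by clear e1 e2; elim: a => [|z a IH] /=; rewrite ?take0 ?IH.
have e4 : drop (size a).+2 (a ++ x :: y :: b) = b by clear e1 e2 e3; elim: a => [|z a IH] /=; rewrite ?drop0.
rewrite /tl_step e1 e2 e3 e4; case: (x == y) => //.
Qed.

Lemma tl_step_cup a b l f :
  tl_step (Cup (size a)) (a ++ b, l, f) = (a ++ inr f :: inr f :: b, l, f.+1).
Proof.
have e3 : take (size a) (a ++ b) = a by elim: a => [|z a IH] /=; rewrite ?take0 ?IH.
have e4 : drop (size a) (a ++ b) = b by clear e3; elim: a => [|z a IH] /=; rewrite ?drop0.
by rewrite /tl_step e3 e4.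
Qed.

Lemma split2 (T : Type) (c : seq T) i : (i.+1 < size c)%N ->
  exists a x y b, c = a ++ x :: y :: b /\ size a = i.
Proof.
elim: c i => [|z c IH] [|i] //=.
  by case: c IH => [|y b] //= _ _; exists [::], z, y, b.
move=> /IH [a [x [y [b [-> <-]]]]]; by exists (z :: a), x, y, b.
Qed.

Lemma split0 (T : Type) (c : seq T) i : (i <= size c)%N ->
  exists a b, c = a ++ b /\ size a = i.
Proof.
move=> h; exists (take i c), (drop i c); rewrite cat_take_drop size_takel //.
Qed.

Definition okx (x : org) (n : nat) (z : int) : Prop :=
  match x with
  | inl 0 => (n <= 1)%N /\ z = n%:Z
  | inl 1 => (n <= 1)%N /\ z = - n%:Z
  | inl _ => n = 0%N
  | inr _ => ((n == 0%N) || (n == 2%N)) /\ z = 0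
  end.
Arguments okx : simpl never.

Definition Inv (c : seq org) (f : nat) : Prop :=
  (forall x, okx x (count_mem x c) (sc x c)) /\ (forall t, inr t \in c -> (t < f)%N).

Lemma okx0 x : okx x 0 0.
Proof. by case: x => [[|[|k]]|t]; rewrite /okx. Qed.

Lemma okx_cnt0 x s : count_mem x s = 0%N -> okx x (count_mem x s) (sc x s).
Proof. by move=> h; rewrite sc0 // h; apply: okx0. Qed.

Lemma cnt_c (z : org) a x y b : count_mem z (a ++ x :: y :: b) =
  (count_mem z (a ++ b) + nat_of_bool (x == z) + nat_of_bool (y == z))%N.
Proof. rewrite !count_cat /=; lia. Qed.

Lemma sc_c z a x y b : sc z (a ++ x :: y :: b) =
  sc z (a ++ b) + (-1) ^+ size a * ((nat_of_bool (x == z))%:Z - (nat_of_bool (y == z))%:Z).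
Proof. rewrite !sc_cat /=; ring. Qed.

Lemma okx_sub2 x n s : okx x (n + 2) s -> okx x n s.
Proof.
case: x => [[|[|k]]|t]; rewrite /okx; try lia.
Qed.

Lemma okx_inl1 k n s : okx (inl k) (n + 1) s -> n = 0%N.
Proof. case: k => [|[|k]]; rewrite /okx; lia. Qed.

Lemma okx_inr1 t n s : okx (inr t) (n + 1) s -> n = 1%N /\ s = 0.
Proof. rewrite /okx; case=> /orP [] /eqP h ->; lia. Qed.

Lemma Inv_cap a x y b l f : Inv (a ++ x :: y :: b) f ->
  Inv (tl_step (Cap (size a)) (a ++ x :: y :: b, l, f)).1.1 f.
Proof.
case=> hok hfr; rewrite tl_step_cap.
set r := a ++ b; set sg := (-1) ^+ size a : int.
have hc z := cnt_c z a x y b; have hs z := sc_c z a x y b.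
rewrite -/r -/sg in hc hs.
have memr z : z \in r -> z \in a ++ x :: y :: b.
  by rewrite /r !mem_cat in_cons in_cons => /orP [] ->; rewrite ?orbT.
have xin : x \in a ++ x :: y :: b by rewrite mem_cat in_cons eqxx orbT.
have yin : y \in a ++ x :: y :: b by rewrite mem_cat !in_cons eqxx !orbT.
have frr : forall t, inr t \in r -> (t < f)%N by move=> t /memr /hfr.
have frm : forall o1 o2, o1 \in a ++ x :: y :: b -> o2 \in a ++ x :: y :: b ->
    forall t, inr t \in map (repl o1 o2) r -> (t < f)%N.
  move=> o1 o2 _ h2 t /mem_repl /orP [/memr /hfr //|/eqP e].
  by apply: hfr; rewrite e.
have [exy|nxy] := eqVneq x y.
  subst y; split => // z.
  have [ezx|nzx] := eqVneq z x.
    subst z; apply: okx_sub2.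
    move: (hok x); rewrite hc hs eqxx /= subrr mulr0 addr0.
    by rewrite -addnA.
  by move: (hok z); rewrite hc hs eq_sym (negbTE nzx) /= subrr mulr0 !addr0 !addn0.
have nyx : y != x by rewrite eq_sym.
case ex: x => [k|t]; case ey: y => [j|u]; subst x y.
-
  split => // z.
  have [ezx|nzx] := eqVneq z (inl k).
    subst z; apply: okx_cnt0; move: (hok (inl k)); rewrite hc eqxx ?(negbTE nxy) ?(negbTE nyx) addn0.
    exact: okx_inl1.
  have [ezy|nzy] := eqVneq z (inl j).
    subst z; apply: okx_cnt0; move: (hok (inl j)); rewrite hc eqxx ?(negbTE nxy) ?(negbTE nyx).
    rewrite addn0; exact: okx_inl1.
  move: (hok z); rewrite hc hs eq_sym (negbTE nzx) eq_sym (negbTE nzy) /= subrr mulr0.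
  by rewrite !addr0 !addn0.
-
  split; last exact: frm.
  move=> z; rewrite cnt_repl // sc_repl //.
  have [ezy|nzy] := eqVneq z (inr u); first exact: okx0.
  have [ezx|nzx] := eqVneq z (inl k); last first.
    move: (hok z); rewrite hc hs eq_sym (negbTE nzx) eq_sym (negbTE nzy) /= subrr mulr0.
    by rewrite !addr0 !addn0.
  subst z.
  have := hok (inr u); rewrite hc hs eqxx /= => /okx_inr1 [c1 s1].
  have := hok (inl k); rewrite hc hs eqxx /= addn0.
  rewrite ?addn0 in c1; rewrite c1.
  have -> : sc (inl k) r + sg * (1 - 0) = sc (inl k) r + sc (inr u) r.
    by move: s1; rewrite subr0 sub0r mulrN1 => /eqP; rewrite subr_eq0 => /eqP <-; rewrite mulr1.
  by [].
-
  split; last exact: frm.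
  move=> z; rewrite cnt_repl // sc_repl //.
  have [ezx|nzx] := eqVneq z (inr t); first exact: okx0.
  have [ezy|nzy] := eqVneq z (inl j); last first.
    move: (hok z); rewrite hc hs eq_sym (negbTE nzx) eq_sym (negbTE nzy) /= subrr mulr0.
    by rewrite !addr0 !addn0.
  subst z.
  have := hok (inr t); rewrite hc hs eqxx /= addn0 => /okx_inr1 [c1 s1].
  have := hok (inl j); rewrite hc hs eqxx /=.
  rewrite ?addn0 in c1; rewrite c1.
  have -> : sc (inl j) r + sg * (0 - 1) = sc (inl j) r + sc (inr t) r.
    by move: s1; rewrite subr0 mulr1 => /eqP; rewrite addr_eq0 => /eqP ->; rewrite sub0r mulrN1.
  by rewrite addn0.
-
  split; last exact: frm.
  move=> z; rewrite cnt_repl // sc_repl //.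
  have [ezx|nzx] := eqVneq z (inr t); first exact: okx0.
  have [ezy|nzy] := eqVneq z (inr u); last first.
    move: (hok z); rewrite hc hs eq_sym (negbTE nzx) eq_sym (negbTE nzy) /= subrr mulr0.
    by rewrite !addr0 !addn0.
  subst z.
  have := hok (inr t); rewrite hc hs eqxx ?(negbTE nxy) ?(negbTE nyx) /= addn0 => /okx_inr1 [c1 s1].
  have := hok (inr u); rewrite hc hs eqxx ?(negbTE nxy) ?(negbTE nyx) /=.
  rewrite ?addn0 in c1; rewrite c1.
  have -> : sc (inr u) r + sg * (0 - 1) = sc (inr u) r + sc (inr t) r.
    by move: s1; rewrite subr0 mulr1 => /eqP; rewrite addr_eq0 => /eqP ->; rewrite sub0r mulrN1.
  by rewrite addn0.
Qed.

Lemma Inv_cup a b l f : Inv (a ++ b) f ->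
  Inv (tl_step (Cup (size a)) (a ++ b, l, f)).1.1 (tl_step (Cup (size a)) (a ++ b, l, f)).2.
Proof.
case=> hok hfr; rewrite tl_step_cup /=.
have nf : inr f \notin a ++ b by apply/negP => /hfr; rewrite ltnn.
split.
  move=> z; rewrite cnt_c sc_c subrr mulr0 addr0.
  have [ezf|nzf] := eqVneq z (inr f).
    subst z; rewrite ?eqxx /=; move: nf; rewrite mem_cnt -eqn0Ngt => /eqP h.
    by rewrite h sc0 // /okx.
  by rewrite !addn0.
move=> t; rewrite mem_cat !in_cons => /orP [ha|/orP [/eqP [->]//|/orP [/eqP [->]//|hb]]].
  by apply: ltnW; apply: hfr; rewrite mem_cat ha.
by apply: ltnW; apply: hfr; rewrite mem_cat hb orbT.
Qed.

Arguments tl_step : simpl never.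

Definition phi (x0 x1 : nat) (o : org) : org :=
  match o with inl k => inr (if k == 0%N then x0 else x1) | inr t => inr (t + 2)%N end.

Notation L0 := (@inl nat nat 0%N).
Notation L1 := (@inl nat nat 1%N).

Definition P2 (c : seq org) (x0 x1 : nat) : Prop :=
  forall t, inr t \in c -> (t + 2 <> x0 /\ t + 2 <> x1)%N.
Definition P3 (c : seq org) (x0 x1 : nat) : Prop :=
  (count_mem L0 c = 1%N /\ count_mem L1 c = 1%N /\ x0 <> x1) \/
  (count_mem L0 c = 0%N /\ count_mem L1 c = 0%N /\ x0 = x1).

Definition J (st st' : seq org * nat * nat) : Prop :=
  exists x0 x1, [/\ Inv st.1.1 st.2, P2 st.1.1 x0 x1, P3 st.1.1 x0 x1,
    (x0 < st.2 + 2)%N /\ (x1 < st.2 + 2)%N &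
    st' = (map (phi x0 x1) st.1.1 ++ [:: inr x1; inr x0], st.1.2, (st.2 + 2)%N)].

Lemma inl_small c f k : Inv c f -> inl k \in c -> (k <= 1)%N.
Proof.
case=> hok _; rewrite mem_cnt; move: (hok (inl k)).
by case: k => [|[|k]] //; rewrite /okx => ->.
Qed.

Lemma inl_both c f x0 x1 k : Inv c f -> P3 c x0 x1 -> inl k \in c ->
  [/\ count_mem L0 c = 1%N, count_mem L1 c = 1%N & x0 <> x1].
Proof.
move=> hi [[h0 [h1 h]]|[h0 [h1 h]]] kin; first by split.
have := inl_small hi kin; move: kin; rewrite mem_cnt.
by case: k => [|[|k]] //; rewrite ?h0 ?h1.
Qed.

Lemma phi_inj c f x0 x1 o o' : Inv c f -> P2 c x0 x1 -> P3 c x0 x1 ->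
  o \in c -> o' \in c -> (phi x0 x1 o == phi x0 x1 o') = (o == o').
Proof.
move=> hi h2 h3.
case: o => [k|t] oin; case: o' => [k'|t'] o'in /=.
- have [_ _ nx] := inl_both hi h3 oin.
  have [<-|nk] := eqVneq k k'; first by rewrite !eqxx.
  have := inl_small hi oin; have := inl_small hi o'in.
  have -> : (inl k == inl k' :> org) = false by apply/eqP => -[] /eqP; rewrite (negbTE nk).
  case: k oin nk => [|[|k]] // oin nk; case: k' o'in nk => [|[|k']] // o'in nk.
  + by move=> _ _; apply/eqP => -[].
  + by move=> _ _; apply/eqP => -[] /esym.
- have [ha hb] := h2 _ o'in.
  case: (k == 0%N); apply/eqP => -[] /esym.
  + exact: ha.
  + exact: hb.
- have [ha hb] := h2 _ oin.
  case: (k' == 0%N); apply/eqP => -[].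
  + exact: ha.
  + exact: hb.
- apply/eqP/eqP => [[e]|[->]] //; congr inr; lia.
Qed.

Lemma tl_step_cup' a b l f i : size a = i ->
  tl_step (Cup i) (a ++ b, l, f) = (a ++ inr f :: inr f :: b, l, f.+1).
Proof. by move=> <-; exact: tl_step_cup. Qed.

Lemma tl_step_cap' a x y b l f i : size a = i ->
  tl_step (Cap i) (a ++ x :: y :: b, l, f) =
  if x == y then (a ++ b, l.+1, f) else
  match x, y with
  | inr _, _ => (map (repl x y) (a ++ b), l, f)
  | _, inr _ => (map (repl y x) (a ++ b), l, f)
  | _, _ => (a ++ b, l, f) end.
Proof. by move=> <-; exact: tl_step_cap. Qed.

Lemma J_cup a b l f st' : J (a ++ b, l, f) st' ->
  J (tl_step (Cup (size a)) (a ++ b, l, f)) (tl_step (Cup (size a)) st').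
Proof.
case=> x0 [x1 [hi h2 h3 [f0 f1] ->]]; rewrite /= in hi h2 h3 f0 f1.
have hi' := Inv_cup l hi; rewrite tl_step_cup /= in hi'.
rewrite map_cat -catA (tl_step_cup' _ _ _ (size_map _ a)) tl_step_cup.
exists x0, x1; split => //=.
- move=> t; rewrite mem_cat !in_cons => /orP [ha|/orP [/eqP [->]|/orP [/eqP [->]|hb]]];
    try lia.
  + by apply: h2; rewrite mem_cat ha.
  + by apply: h2; rewrite mem_cat hb orbT.
- by rewrite /P3 !cnt_c /= !addn0.
- lia.
- by rewrite map_cat /= -catA addSn.
Qed.

Lemma J_cap a x y b l f st' : J (a ++ x :: y :: b, l, f) st' ->
  J (tl_step (Cap (size a)) (a ++ x :: y :: b, l, f)) (tl_step (Cap (size a)) st').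
Proof.
case=> x0 [x1 [hi h2 h3 [f0 f1] ->]]; rewrite /= in hi h2 h3 f0 f1.
have hi' := Inv_cap l hi.
rewrite map_cat /= -catA /=.
rewrite (tl_step_cap' (phi x0 x1 x) (phi x0 x1 y) (map (phi x0 x1) b ++ [:: inr x1; inr x0]) l
  (f + 2) (size_map (phi x0 x1) a)).
rewrite tl_step_cap in hi' *.
rewrite !catA -!map_cat.
set r := a ++ b.
rewrite -/r in hi'.
have hc z := cnt_c z a x y b; rewrite -/r in hc.
have memr z : z \in r -> z \in a ++ x :: y :: b.
  by rewrite /r !mem_cat in_cons in_cons => /orP [] ->; rewrite ?orbT.
have xin : x \in a ++ x :: y :: b by rewrite mem_cat in_cons eqxx orbT.
have yin : y \in a ++ x :: y :: b by rewrite mem_cat !in_cons eqxx !orbT.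
rewrite (phi_inj hi h2 h3 xin yin).
have [exy|nxy] := eqVneq x y.
  subst y; rewrite eqxx in hi' *.
  case ex: x => [k|t]; subst x.
    by move: (hi.1 (inl k)); rewrite hc eqxx /= => /okx_inl1; rewrite addn1.
  exists x0, x1; split => //=.
  - by move=> v /memr /h2.
  - by move: h3; rewrite /P3 !hc /= !addn0.
rewrite (negbTE nxy) in hi'.
have nyx : y != x by rewrite eq_sym.
case ex: x => [k|t]; last first.
  subst x; rewrite /= in hi'.
  have c1 : count_mem (inr t) r = 1%N.
    by move: (hi.1 (inr t)); rewrite hc eqxx (negbTE nyx) addn0 => /okx_inr1 [].
  have cnt_new z : z != inr t -> count_mem z (map (repl (inr t) y) r) =
      count_mem z (a ++ inr t :: y :: b).
    move=> nz; rewrite cnt_repl // (negbTE nz) hc; case: ifP => [/eqP -> | nzy].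
      by rewrite c1 eqxx (negbTE nxy) addn0 addn1.
    by rewrite eq_sym (negbTE nz) eq_sym nzy !addn0.
  exists x0, x1; split => //.
  - move=> v /= /mem_repl /orP [/memr /h2 //| /eqP e]; apply: h2; by rewrite e.
  - by rewrite /P3 /= !cnt_new.
  - rewrite /= map_cat; congr (_ ++ _, _, _).
      rewrite -!map_comp; apply/eq_in_map => o /memr oin /=; rewrite /repl.
      rewrite -[inr (t + 2)]/(phi x0 x1 (inr t)) (phi_inj hi h2 h3 oin xin).
      by case: (o == inr t).
    have [ha hb] := h2 _ xin.
    rewrite /= /repl.
    have -> : (inr x1 == inr (t + 2) :> org) = false by apply/eqP => -[] /esym.
    by have -> : (inr x0 == inr (t + 2) :> org) = false by apply/eqP => -[] /esym.
subst x.
have hk := inl_small hi xin.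
have [c0 c1 nx] := inl_both hi h3 xin.
have ck : count_mem (inl k) r = 0%N.
  move: (hi.1 (inl k)); rewrite hc eqxx (negbTE nyx) addn0; exact: okx_inl1.
case ey: y => [j|u]; subst y; rewrite /= in hi'.
  have hj := inl_small hi yin.
  have cj : count_mem (inl j) r = 0%N.
    move: (hi.1 (inl j)); rewrite hc eqxx (negbTE nxy) /= addn0; exact: okx_inl1.
  have rinr o : o \in r -> exists v, o = inr v.
    case: o => [k'|v] oin; last by exists v.
    have := inl_small hi (memr _ oin); move: oin; rewrite mem_cnt.
    destruct k as [|[|k]]; destruct j as [|[|j]]; destruct k' as [|[|k']];
      rewrite ?ck ?cj //.
  exists (if j == 0%N then x0 else x1), (if j == 0%N then x0 else x1); split => //.
  - move=> v /= /memr /h2 [ha hb]; by case: ifP.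
  - right; rewrite /=.
    destruct k as [|[|k]]; destruct j as [|[|j]]; rewrite ?ck ?cj //.
  - by case: ifP.
  - rewrite /= map_cat; congr (_ ++ _, _, _).
      rewrite -map_comp; apply/eq_in_map => o oin /=; rewrite /repl.
      have [v ov] := rinr o oin; subst o.
      have [ha hb] := h2 _ (memr _ oin).
      by destruct k as [|[|k]] => //=; case: ifP => // /eqP [].
    rewrite /= /repl.
    destruct k as [|[|k]]; destruct j as [|[|j]] => //=.
      by rewrite eqxx; case: ifP.
    by rewrite eqxx; case: ifP.
have cu : count_mem (inr u) r = 1%N.
  by move: (hi.1 (inr u)); rewrite hc eqxx /= addn0 => /okx_inr1 [].
have cnt_new z : z != inr u -> count_mem z (map (repl (inr u) (inl k)) r) =
    count_mem z (a ++ inl k :: inr u :: b).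
  move=> nz; rewrite cnt_repl // (negbTE nz) hc; case: ifP => [/eqP -> | nzk].
    by rewrite ck cu eqxx /=.
  by rewrite eq_sym nzk eq_sym (negbTE nz) !addn0.
have nu : inr u \notin map (repl (inr u) (inl k)) r by rewrite mem_cnt cnt_repl // eqxx.
have [hu0 hu1] := h2 _ yin.
have fu : (u < f)%N := hi.2 _ yin.
exists (if k == 0%N then (u + 2)%N else x0), (if k == 0%N then x1 else (u + 2)%N); split => //.
- move=> v /= vin.
  have vu : v <> u by move=> e; subst v; rewrite vin in nu.
  move: vin => /mem_repl /orP [/memr /h2 [ha hb]|//].
  by case: ifP => _; split => // e; apply: vu; lia.
- left; rewrite /= !cnt_new // c0 c1; split => //; split => //.
  by case: ifP => _ e; [apply: hu1 | apply: hu0].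
- by rewrite /=; case: ifP => _; lia.
- rewrite /= map_cat; congr (_ ++ _, _, _).
    rewrite -!map_comp; apply/eq_in_map => o oin.
    have okn : o != inl k by apply: contraTneq oin => ->; rewrite mem_cnt ck.
    rewrite /= /repl.
    have := phi_inj hi h2 h3 (memr _ oin) xin; rewrite (negbTE okn) /= => ->.
    have [ou|onu] := eqVneq o (inr u).
      by subst o; destruct k as [|[|k]].
    case: o oin okn onu => [k'|v] oin okn onu //.
    have := inl_small hi (memr _ oin).
    by destruct k as [|[|k]]; destruct k' as [|[|k']].
  rewrite /= /repl.
  destruct k as [|[|k]] => //=.
    have -> : (inr x1 == inr x0 :> org) = false by apply/eqP => -[] /esym.
    by rewrite eqxx.
  have -> : (inr x0 == inr x1 :> org) = false by apply/eqP => -[].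
  by rewrite eqxx.
Qed.

Definition nocross (w : seq slice) := all (fun s => if s is Cross _ _ then false else true) w.

Lemma run_J w : forall n m st st', word_ok w n = Some m -> nocross w ->
  size st.1.1 = n -> J st st' -> J (tl_run w st) (tl_run w st') /\ size (tl_run w st).1.1 = m.
Proof.
elim: w => [|s w IH] n m [[c l] f] st' /=.
  by case=> <- _ -> h; split.
case: s => [i b|i|i] //=.
- case: ifP => // hi hw nc hs hJ.
  rewrite -hs in hi; have [a [b0 [ec ea]]] := split0 hi; subst c i.
  apply: (IH n.+2) => //.
    by rewrite tl_step_cup /= size_cat /= -hs size_cat addnS addnS.
  exact: J_cup.
- case: ifP => // hi hw nc hs hJ.
  rewrite -hs in hi; have [a [x [y [b0 [ec ea]]]]] := split2 hi; subst c i.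
  apply: (IH n.-2) => //.
    rewrite tl_step_cap -hs !size_cat /=.
    by case: ifP => _; [|case: (x) => [?|?]; [case: (y) => [?|?]|]]; rewrite /= ?size_map size_cat ?addnS ?addnS.
  exact: J_cap.
Qed.

Lemma J_init : J ([:: L0; L1], 0%N, 0%N) ([:: inr 0%N; inr 1%N; inr 1%N; inr 0%N], 0%N, 2%N).
Proof.
exists 0%N, 1%N; split => //=.
- split; last by move=> t; rewrite !in_cons.
  by case=> [[|[|k]]|t]; rewrite /okx.
- by left.
Qed.

Lemma J_final c l f c' l' f' : J (c, l, f) (c', l', f') -> size c = 2%N ->
  l' = l /\ f' = (f + 2)%N /\
  ((is_pat0 c /\ exists p g, c' = [:: inr p; inr p; inr g; inr g] /\ p <> g /\ (p < f')%N /\ (g < f')%N) \/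
   (is_patinf c /\ exists p g, c' = [:: inr p; inr g; inr g; inr p] /\ p <> g /\ (p < f')%N /\ (g < f')%N)).
Proof.
case=> x0 [x1 [hi h2 h3 [f0 f1] e]]; case: e => -> -> ->; rewrite /= in hi h2 h3 f0 f1.
split => //; split => //.
case: c hi h2 h3 H => [|o1 [|o2 [|]]] // hi h2 h3 _.
have hok := hi.1; have hfr := hi.2.
case: h3 => [[c0 [c1 nx]] | [c0 [c1 ex]]].
- destruct o1 as [[|[|k1]]|t1]; destruct o2 as [[|[|k2]]|t2]; move: c0 c1 => //= _ _.
  all: try (by move: (hok L0); rewrite /okx /= => -[]).
  all: try (by right; split => //; exists x0, x1; split => //; lia).

- subst x1.
  destruct o1 as [[|[|k1]]|t1]; destruct o2 as [[|[|k2]]|t2]; move: c0 c1 => //= _ _.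
  all: try (by move: (hok (inl k1.+2)); rewrite /okx /= eqxx).
  all: try (by move: (hok (inl k2.+2)); rewrite /okx /= eqxx ?addn1).
  have e : t2 = t1.
    move: (hok (inr t1)); rewrite /okx /= eqxx /=.
    case: (eqVneq t2 t1) => [->|ne] //. rewrite (_ : (inr t2 == inr t1 :> org) = false) //; first by case. by apply/negbTE.
  subst t2; left; split; first exact: eqxx.
  have [ha _] := h2 t1 (mem_head _ _).
  have := hfr t1 (mem_head _ _).
  exists (t1 + 2)%N, x0; split => //; split => //; lia.
Qed.

Lemma post_pat0 p g l F : p <> g -> (p < F)%N -> (g < F)%N ->
  (tl_run [:: Cap 2; Cup 2; Cap 1; Cap 0] ([:: inr p; inr p; inr g; inr g], l, F)).1.2 = l.+2 /\
  (tl_run [:: Cap 1; Cap 0] ([:: inr p; inr p; inr g; inr g], l, F)).1.2 = l.+1.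
Proof.
move=> pg pF gF.
have e1 : (inr p == inr g :> org) = false by apply/eqP => -[].
have e2 : (inr p == inr F :> org) = false by apply/eqP => -[]; lia.
rewrite /tl_run /tl_step /=; do 6 (rewrite ?eqxx ?e1 ?e2 ?if_same /=); by [].
Qed.

Lemma post_inf p g l F : p <> g -> (p < F)%N -> (g < F)%N ->
  (tl_run [:: Cap 2; Cup 2; Cap 1; Cap 0] ([:: inr p; inr g; inr g; inr p], l, F)).1.2 = l.+1 /\
  (tl_run [:: Cap 1; Cap 0] ([:: inr p; inr g; inr g; inr p], l, F)).1.2 = l.+2.
Proof.
move=> pg pF gF.
have e1 : (inr g == inr p :> org) = false by apply/eqP => -[]; lia.
have e2 : (inr p == inr F :> org) = false by apply/eqP => -[]; lia.
rewrite /tl_run /tl_step /=; do 6 (rewrite ?eqxx ?e1 ?e2 ?if_same /=); by [].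
Qed.
Lemma algA1 (F : fieldType) (a q : F) (n : nat) : a != 0 ->
  q * (a * 1) * (- a ^+ 2 - a ^- 2) ^+ n + q * (a^-1 * 1) * (- a ^+ 2 - a ^- 2) ^+ n.+1 = - a ^- 3 * (q * (- a ^+ 2 - a ^- 2) ^+ n) - a ^+ 3 * 0.
Proof. move=> a0; rewrite (exprS (- a ^+ 2 - a ^- 2) n); move: ((- a ^+ 2 - a ^- 2) ^+ n) => D; field; exact: a0. Qed.

Lemma algA2 (F : fieldType) (a q : F) (n : nat) : a != 0 ->
  q * (a * 1) * (- a ^+ 2 - a ^- 2) ^+ n.+1 + q * (a^-1 * 1) * (- a ^+ 2 - a ^- 2) ^+ n = - a ^- 3 * 0 - a ^+ 3 * (q * (- a ^+ 2 - a ^- 2) ^+ n).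
Proof. move=> a0; rewrite (exprS (- a ^+ 2 - a ^- 2) n); move: ((- a ^+ 2 - a ^- 2) ^+ n) => D; field; exact: a0. Qed.

Lemma algA3 (F : fieldType) (a q : F) (n : nat) : a != 0 ->
  q * (a * 1) * (- a ^+ 2 - a ^- 2) ^+ n.+1 + q * (a^-1 * 1) * (- a ^+ 2 - a ^- 2) ^+ n = - a ^+ 3 * (q * (- a ^+ 2 - a ^- 2) ^+ n) - a ^- 3 * 0.
Proof. move=> a0; rewrite (exprS (- a ^+ 2 - a ^- 2) n); move: ((- a ^+ 2 - a ^- 2) ^+ n) => D; field; exact: a0. Qed.

Lemma algA4 (F : fieldType) (a q : F) (n : nat) : a != 0 ->
  q * (a * 1) * (- a ^+ 2 - a ^- 2) ^+ n + q * (a^-1 * 1) * (- a ^+ 2 - a ^- 2) ^+ n.+1 = - a ^+ 3 * 0 - a ^- 3 * (q * (- a ^+ 2 - a ^- 2) ^+ n).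
Proof. move=> a0; rewrite (exprS (- a ^+ 2 - a ^- 2) n); move: ((- a ^+ 2 - a ^- 2) ^+ n) => D; field; exact: a0. Qed.



Lemma jones_alg (F : fieldType) (a al be : F) (w : int) : a != 0 -> a ^+ 12 != 1 ->
  (- a ^+ 3) ^ (- w) * (- a ^+ 3 * al - a ^- 3 * be) =
  (- a ^+ 3) ^ (- (w + 2%:Z)) * (- a ^- 3 * al - a ^+ 3 * be) -> al = 0.
Proof.
move=> a0 a12 H.
have u0 : - a ^+ 3 != 0 by rewrite oppr_eq0 expf_neq0.
move: H; rewrite opprD expfzDr // -mulrA => /(mulfI (expfz_neq0 _ u0)) H.
have H' : - a ^- 3 * al - a ^+ 3 * be = (- a ^+ 3) ^+ 2 * (- a ^+ 3 * al - a ^- 3 * be).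
  rewrite H mulrA.
  have -> : (- a ^+ 3) ^ (- 2%:Z) = ((- a ^+ 3) ^+ 2)^-1 by [].
  by rewrite mulfV ?mul1r // expf_neq0.
have e : al * (1 - a ^+ 12) =
    a ^+ 3 * ((- a ^+ 3) ^+ 2 * (- a ^+ 3 * al - a ^- 3 * be) - (- a ^- 3 * al - a ^+ 3 * be)).
  field; exact: a0.
move: e; rewrite -H' subrr mulr0 => /eqP; rewrite mulf_eq0 subr_eq0 [1 == _]eq_sym (negbTE a12) orbF.
by move/eqP.
Qed.

Lemma expand_valid w : forall n m, word_ok w n = Some m ->
  all (fun p => (word_ok p.2 n == Some m) && nocross p.2) (expand w).
Proof.
elim: w => [|s w IH] n m /=.
  by case=> ->; rewrite eqxx.
case: s => [i b|i|i] /=.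
- case: ifP => // hi hw.
  have h := IH _ _ hw.
  have e1 : (i <= n.-2)%N by lia.
  have e2 : n.-2.+2 = n by lia.
  case: b; rewrite all_cat !all_map; apply/andP; split; apply: (sub_all _ h) => p //=;
    by rewrite hi e1 e2.
- case: ifP => // hi hw.
  rewrite all_map; apply: (sub_all _ (IH _ _ hw)) => p /=; by rewrite hi.
- case: ifP => // hi hw.
  rewrite all_map; apply: (sub_all _ (IH _ _ hw)) => p /=; by rewrite hi.
Qed.

Lemma big_all_eq (T : Type) (s : seq T) (P : pred T) (F G : T -> LF) :
  all P s -> (forall x, P x -> F x = G x) -> \sum_(x <- s) F x = \sum_(x <- s) G x.
Proof.
move=> hs hFG; elim: s hs => [|x s IH] /=; first by rewrite !big_nil.
by case/andP => px ps; rewrite !big_cons hFG // IH.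
Qed.

Definition post1 := [:: Cap 2; Cup 2; Cap 1; Cap 0].
Definition post2 := [:: Cap 1; Cap 0].

Lemma pat_excl c : is_pat0 c -> ~~ is_patinf c.
Proof. by case: c => [|[?|?] [|[?|?] [|]]]. Qed.

Lemma state_val w : word_ok w 2 = Some 2%N -> nocross w ->
  let r := tl_run w ([:: L0; L1], 0%N, 0%N) in
  let G v := (tl_run ([:: Cup 0; Cup 1] ++ w ++ v) ([::], 0%N, 0%N)).1.2 in
  (is_pat0 r.1.1 /\ ~~ is_patinf r.1.1 /\ G post1 = r.1.2.+2 /\ G post2 = r.1.2.+1) \/
  (is_patinf r.1.1 /\ ~~ is_pat0 r.1.1 /\ G post1 = r.1.2.+1 /\ G post2 = r.1.2.+2).
Proof.
move=> hw nc r G.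
have eG v : G v = (tl_run v (tl_run w ([:: inr 0%N; inr 1%N; inr 1%N; inr 0%N], 0%N, 2%N))).1.2.
  by rewrite /G !tl_run_cat.
have [hJ _] := run_J (st := ([:: L0; L1], 0%N, 0%N)) hw nc (erefl _) J_init.
have [_ hs] := run_J (st := ([:: L0; L1], 0%N, 0%N)) hw nc (erefl _) J_init.
rewrite eG eG; rewrite -/r in hJ hs *.
move: hJ hs; case: r => [[c l] f] /=.
case: (tl_run w _) => [[c' l'] f'] hJ hs.
have [-> [-> [[hp [p [g [-> [pg [pF gF]]]]]]|[hp [p [g [-> [pg [pF gF]]]]]]]]] := J_final hJ hs.
- left; have [e1 e2] := post_pat0 l pg pF gF.
  by rewrite e1 e2; split => //; split => //; exact: pat_excl.
- right; have [e1 e2] := post_inf l pg pF gF.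
  rewrite e1 e2; split => //; split => //.
  by apply/negP => /pat_excl; rewrite hp.
Qed.

Lemma numer_eq S b : numer (tsum S [:: Cross 0 b]) = [:: Cup 0; Cup 1] ++ S ++ [:: Cross 2 b; Cap 1; Cap 0].
Proof. by rewrite /numer /tsum /= -catA. Qed.

Lemma A_neq0 : A != 0.
Proof. by rewrite /A tofrac_eq0 polyX_eq0. Qed.

Lemma bracket_formula S b : is_tangle S -> bracket (numer (tsum S [:: Cross 0 b])) =
  if b then - A ^- 3 * alpha S - A ^+ 3 * beta S else - A ^+ 3 * alpha S - A ^- 3 * beta S.
Proof.
move=> hS; rewrite numer_eq /bracket.
rewrite (expand_cat_sum _ _ (fun w => dloop ^+ (tl_run w ([::], 0%N, 0%N)).1.2.-1)).
rewrite /= big_cons big_nil addr0.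
under eq_bigr do rewrite mul1r.
rewrite (expand_cat_sum S _ (fun w => dloop ^+ (tl_run (Cup 0 :: Cup 1 :: w) ([::], 0%N, 0%N)).1.2.-1)).
case: b; rewrite /alpha /beta !mulr_sumr -sumrB;
  apply: (big_all_eq (expand_valid hS)) => p /andP [/eqP hw nc];
  have := state_val hw nc; rewrite /= !big_cons big_nil /= addr0;
  case=> [[h1 [h2 [e1 e2]]]|[h1 [h2 [e1 e2]]]]; rewrite e1 e2 h1 (negbTE h2) /=.
all: move: (tl_run p.2 _).1.2 => n; move: p.1 => q.
all: first [exact: (@algA1 _ A q n A_neq0) | exact: (@algA2 _ A q n A_neq0)
  | exact: (@algA3 _ A q n A_neq0) | exact: (@algA4 _ A q n A_neq0)].
Qed.

Lemma nth_swap (d : slice) u x y v k : k != size u ->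
  nth d (u ++ x :: v) k = nth d (u ++ y :: v) k.
Proof.
move=> hk; rewrite !nth_cat; case: ifP => // hlt.
case e: (k - size u)%N => [|m] //=; lia.
Qed.

Lemma nth_mid (d : slice) u x v : nth d (u ++ x :: v) (size u) = x.
Proof. by elim: u. Qed.

Lemma sum_change (N k0 : nat) (f g : nat -> int) : (k0 < N)%N ->
  (forall k, k != k0 -> f k = g k) ->
  \sum_(k < N) g k = \sum_(k < N) f k + (g k0 - f k0).
Proof.
move=> hk hfg.
rewrite (bigD1 (Ordinal hk)) //= [in RHS](bigD1 (Ordinal hk)) //=.
rewrite (eq_bigr (fun k : 'I_N => f k)); last first.
  by move=> i hi; rewrite hfg //; apply: contra hi => /eqP e; apply/eqP/val_inj.
by ring.
Qed.

Lemma writhe_rel S os : crossing_sign (numer (tsum S tone)) os (size S).+2 = -1 ->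
  writhe (numer (tsum S tmone)) os = writhe (numer (tsum S tone)) os + 2.
Proof.
rewrite /writhe /tone /tmone !numer_eq !catA.
set u := [:: Cup 0; Cup 1] ++ S.
have hu : size u = (size S).+2 by rewrite /u size_cat.
rewrite -hu => hcs.
rewrite !size_cat /=.
rewrite (@sum_change _ (size u) (fun k => crossing_sign (u ++ [:: Cross 2 false; Cap 1; Cap 0]) os k)); last 2 first.
- lia.
- by move=> k hk; rewrite /crossing_sign (nth_swap _ _ (Cross 2 true) _ hk).
have c1 : crossing_sign (u ++ [:: Cross 2 true; Cap 1; Cap 0]) os (size u) =
    - crossing_sign (u ++ [:: Cross 2 false; Cap 1; Cap 0]) os (size u).
  by rewrite /crossing_sign !nth_mid /=; case: (nth false _ 2 == _).
congr (_ + _); by rewrite c1 hcs.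
Qed.

Lemma A12 : A ^+ 12 != 1.
Proof.
rewrite /A -tofracXn -tofrac1 tofrac_eq; apply/eqP => h.
by have := size_polyXn int 12; rewrite h size_poly1.
Qed.

Theorem mainTheorem5 (S : seq slice) (os : seq (seq bool)) :
  is_tangle S ->
  link_orientation (numer (tsum S tone)) os ->
  crossing_sign (numer (tsum S tone)) os (size S).+2 = -1 ->
  jones (numer (tsum S tone)) os = jones (numer (tsum S tmone)) os ->
  alpha S = 0 /\ bracket (numer (tsum S tone)) = - A ^- 3 * beta S.
Proof.
move=> hS _ hcs hj.
have hw := writhe_rel hcs.
have bL := bracket_formula false hS.
have bL' := bracket_formula true hS.
move: hj; rewrite /jones hw /tone /tmone bL bL' /= => hj.
have al0 : alpha S = 0 by exact: (@jones_alg _ A (alpha S) (beta S) _ A_neq0 A12 hj).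
by split => //; rewrite al0 mulr0 sub0r mulNr.
Qed.
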